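(* Let $f,g\in\mathcal{S}_d$ and $\beta>0$, and suppose $\hat{\mathbb{D}}_{\beta,d}(f,g)<\infty$. Then $\hat{\mathbb{D}}_{\beta,\infty}(f,g)<\infty$.
   Context: $\mathcal{S}_d$ is the set of multiplicative functions $f=f_1*\cdots*f_d$ where each $f_i$ is completely multiplicative with $|f_i(n)|\le1$, and $(a*b)(n)=\sum_{dm=n}a(d)b(m)$. For $k\in\{1,2,\dots\}\cup\{\infty\}$, $\hat{\mathbb{D}}_{\beta,k}(f,g):=\sum_p\sum_{j=1}^k\frac{|f(p^j)-g(p^j)|}{p^{j\beta}}$ (sum over primes). *)

(* Defs.v *)
From HB Require Import structures.
From mathcomp Require Import all_boot all_order all_algebra.
From mathcomp Require Import complex.
From mathcomp Require Import all_classical all_reals all_analysis.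
Set Implicit Arguments. Unset Strict Implicit. Unset Printing Implicit Defensive.
Import Order.TTheory GRing.Theory Num.Theory.
Local Open Scope ring_scope.
Local Open Scope complex_scope.

Section Defs.
Variable R : realType.

Definition cmod (z : R[i]) : R := ComplexField.Normc.normc z.

(* arithmetic functions: values at n >= 1 are the relevant ones *)
Definition arith := nat -> R[i].

Definition dconv (a b : arith) : arith :=
  fun n => \sum_(d <- divisors n) a d * b (n %/ d)%N.

Definition delta : arith := fun n => if n == 1%N then 1 else 0.

Definition dconv_big (d : nat) (fs : 'I_d -> arith) : arith :=
  foldr (fun i acc => dconv (fs i) acc) delta (enum 'I_d).

Definition completely_multiplicative (f : arith) : Prop :=
  f 1%N = 1 /\ forall m n, (0 < m)%N -> (0 < n)%N -> f (m * n)%N = f m * f n.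

Definition in_S (d : nat) (f : arith) : Prop :=
  exists fs : 'I_d -> arith,
    (forall i, completely_multiplicative (fs i)) /\
    (forall i n, (0 < n)%N -> cmod (fs i n) <= 1) /\
    (forall n, (0 < n)%N -> f n = dconv_big fs n).

Definition Dpart (beta : R) (K : nat) (f g : arith) (N : nat) : R :=
  \sum_(p < N | prime p)
    \sum_(1 <= j < K.+1)
      cmod (f (p ^ j)%N - g (p ^ j)%N) / ((p%:R : R) `^ (j%:R * beta)).

(* \hat D_{beta,k}(f,g) < oo  (series of nonnegative terms with bounded partial sums) *)
Definition Dhat_finite (beta : R) (k : nat) (f g : arith) : Prop :=
  exists M : R, forall N, Dpart beta k f g N <= M.

Definition Dhat_inf_finite (beta : R) (f g : arith) : Prop :=
  exists M : R, forall N K, Dpart beta K f g N <= M.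

End Defs.

(* Main.v *)
Require Import Defs.
From HB Require Import structures.
From mathcomp Require Import all_boot all_order all_algebra.
From mathcomp Require Import complex.
From mathcomp Require Import all_classical all_reals all_analysis.
From mathcomp Require Import ring lra zify.
Import Order.TTheory GRing.Theory Num.Theory.
Local Open Scope ring_scope.

Section Aux.
Variable R : realType.
Local Notation C := (R[i]).
Implicit Types U V : {poly C}.

Lemma cmod_ge0 (z : C) : 0 <= cmod z.
Proof. by case: z => a b; rewrite /cmod /= sqrtr_ge0. Qed.
Lemma cmodD (z1 z2 : C) : cmod (z1 + z2) <= cmod z1 + cmod z2.
Proof. exact: le_normcD. Qed.
Lemma cmodM (z1 z2 : C) : cmod (z1 * z2) = cmod z1 * cmod z2.
Proof. exact: ComplexField.Normc.normcM. Qed.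
Lemma cmodN (z : C) : cmod (- z) = cmod z.
Proof. exact: normcN. Qed.
Lemma cmod0 : cmod (0 : C) = 0.
Proof. exact: ComplexField.Normc.normc0. Qed.
Lemma cmod1 : cmod (1 : C) = 1.
Proof. exact: ComplexField.Normc.normc1. Qed.
Lemma cmodX (z : C) n : cmod (z ^+ n) = cmod z ^+ n.
Proof. by elim: n => [|n IH]; rewrite ?expr0 ?cmod1 // !exprS cmodM IH. Qed.
Lemma cmodB (z1 z2 : C) : cmod (z1 - z2) = cmod (z2 - z1).
Proof. by rewrite -cmodN opprB. Qed.
Lemma cmod_sum (I : Type) (r : seq I) (F : I -> C) :
  cmod (\sum_(i <- r) F i) <= \sum_(i <- r) cmod (F i).
Proof.
elim: r => [|a r IH]; first by rewrite !big_nil cmod0.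
rewrite !big_cons; apply: le_trans (cmodD _ _) _; exact: lerD.
Qed.

Variable w : nat -> R.
Hypothesis w0 : w 0%N = 1.
Hypothesis wge0 : forall j, 0 <= w j.
Hypothesis wD : forall j k, w (j + k)%N = w j * w k.

Definition Sn (N : nat) U : R := \sum_(j < N.+1) cmod U`_j * w j.
Definition tl (N : nat) U : {poly R} := \poly_(j < N.+1) (cmod U`_j * w j).

Lemma Sn_ge0 N U : 0 <= Sn N U.
Proof. by apply: sumr_ge0 => j _; rewrite mulr_ge0 ?cmod_ge0. Qed.

Lemma sum_le_horner1 (P : {poly R}) n : (forall k, 0 <= P`_k) ->
  \sum_(j < n) P`_j <= P.[1].
Proof.
move=> Pge0; rewrite horner_coef; under [X in _ <= X]eq_bigr do rewrite expr1n mulr1.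
case: (leqP n (size P)) => h.
  rewrite (big_ord_widen (size P) (fun j => P`_j) h).
  rewrite [X in _ <= X](bigID (fun i : 'I_(size P) => (i < n)%N)) /=.
  rewrite lerDl; exact: sumr_ge0.
rewrite [X in _ <= X](big_ord_widen n (fun j => P`_j) (ltnW h)).
rewrite [X in X <= _](bigID (fun i : 'I_n => (i < size P)%N)) /=.
rewrite [X in _ + X]big1 ?addr0 // => i; rewrite -leqNgt => ?.
exact: nth_default.
Qed.

Lemma Sn_tl N U : Sn N U = (tl N U).[1].
Proof. by rewrite horner_poly; apply: eq_bigr => j _; rewrite expr1n mulr1. Qed.

Lemma Sn_mul N U V : Sn N (U * V) <= Sn N U * Sn N V.
Proof.
rewrite !Sn_tl -hornerM -Sn_tl /Sn.
apply: le_trans (sum_le_horner1 _ _ _); last first.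
  move=> k; rewrite coefM; apply: sumr_ge0 => i _; rewrite !coef_poly.
  by case: ifP; case: ifP => _ _; rewrite ?mulr0 ?mul0r // !mulr_ge0 ?cmod_ge0.
apply: ler_sum => j _; have jN := ltn_ord j.
rewrite !coefM.
apply: (@le_trans _ _ ((\sum_(k < j.+1) cmod (U`_k * V`_(j-k))) * w j)).
  by apply: ler_wpM2r; [exact: wge0 | exact: cmod_sum].
rewrite big_distrl /=; apply: ler_sum => k _; have kj := ltn_ord k.
have kN : (k < N.+1)%N by apply: leq_ltn_trans jN; rewrite -ltnS.
have jkN : (j - k < N.+1)%N by apply: leq_ltn_trans (leq_subr _ _) jN.
rewrite !coef_poly kN jkN cmodM.
have -> : w j = w k * w (j - k)%N by rewrite -wD subnKC // -ltnS.
by rewrite le_eqVlt; apply/orP; left; apply/eqP; rewrite !mulrA; congr (_ * _); rewrite -!mulrA; congr (_ * _); rewrite mulrC.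
Qed.

Definition low (N : nat) U := forall j, (j <= N)%N -> U`_j = 0.

Lemma low_mull N U V : low N V -> low N (U * V).
Proof.
move=> h j jN; rewrite coefM big1 // => k _; rewrite h ?mulr0 //.
exact: leq_trans (leq_subr _ _) jN.
Qed.
Lemma low_mulr N U V : low N U -> low N (U * V).
Proof. by rewrite mulrC; exact: low_mull. Qed.
Lemma low_add N U V : low N U -> low N V -> low N (U + V).
Proof. by move=> hU hV j jN; rewrite coefD hU ?hV ?addr0. Qed.
Lemma low_opp N U : low N U -> low N (- U).
Proof. by move=> hU j jN; rewrite coefN hU ?oppr0. Qed.
Lemma low_le M N U : (M <= N)%N -> low N U -> low M U.
Proof. by move=> MN h j jM; apply: h; exact: leq_trans jM MN. Qed.
Lemma Sn_low N U V : low N (U - V) -> Sn N U = Sn N V.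
Proof.
move=> h; apply: eq_bigr => j _; congr (cmod _ * _); apply/eqP.
by rewrite -subr_eq0 -coefB h // -ltnS.
Qed.

Lemma key1 N A B P Q : low N (P * A - 1) -> low N (Q * B - 1) ->
  low N ((A - B) - A * B * (Q - P)).
Proof.
move=> hA hB.
have -> : (A - B) - A * B * (Q - P) = - (A * (Q * B - 1)) + B * (P * A - 1) by ring.
by apply: low_add; [apply: low_opp; apply: low_mull | apply: low_mull].
Qed.

Lemma key2 N A B P Q : low N (P * A - 1) -> low N (Q * B - 1) ->
  low N ((P - Q) - P * Q * (B - A)).
Proof.
move=> hA hB.
have -> : (P - Q) - P * Q * (B - A) = - (P * (Q * B - 1)) + Q * (P * A - 1) by ring.
by apply: low_add; [apply: low_opp; apply: low_mull | apply: low_mull].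
Qed.

Lemma Sn_mono N M U : (N <= M)%N -> Sn N U <= Sn M U.
Proof.
move=> NM; rewrite /Sn.
rewrite (big_ord_widen M.+1 (fun j => cmod U`_j * w j) (NM : (N.+1 <= M.+1)%N)).
rewrite [X in _ <= X](bigID (fun i : 'I_M.+1 => (i < N.+1)%N)) /= lerDl.
by apply: sumr_ge0 => j _; rewrite mulr_ge0 ?cmod_ge0.
Qed.

Lemma Sn_size N M U : (size U <= M.+1)%N -> Sn N U <= Sn M U.
Proof.
move=> hs; case: (leqP N M) => h; first exact: Sn_mono.
rewrite le_eqVlt; apply/orP; left; apply/eqP; rewrite /Sn.
rewrite [RHS](big_ord_widen N.+1 (fun j => cmod U`_j * w j) (ltnW h : (M.+1 <= N.+1)%N)).
rewrite [LHS](bigID (fun i : 'I_N.+1 => (i < M.+1)%N)) /=.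
rewrite [X in _ + X]big1 ?addr0 // => i; rewrite -leqNgt => hi.
by rewrite nth_default ?cmod0 ?mul0r //; exact: leq_trans hs hi.
Qed.

Lemma Sn_opp N U : Sn N (- U) = Sn N U.
Proof. by apply: eq_bigr => j _; rewrite coefN cmodN. Qed.

Lemma Sn_swap N U V : Sn N (U - V) = Sn N (V - U).
Proof. by rewrite -Sn_opp opprB. Qed.

Lemma Sn_one N : Sn N 1 <= 1.
Proof.
apply: le_trans (Sn_size N 0 _ _) _; first by rewrite size_poly1.
by rewrite /Sn big_ord_recl big_ord0 addr0 coef1 eqxx mulr1n cmod1 w0 mul1r.
Qed.

Lemma Sn_prod N (I : Type) (s : seq I) (F : I -> {poly C}) :
  Sn N (\prod_(i <- s) F i) <= \prod_(i <- s) Sn N (F i).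
Proof.
elim: s => [|a s IH]; first by rewrite !big_nil Sn_one.
rewrite !big_cons; apply: le_trans (Sn_mul _ _ _) _.
by apply: ler_wpM2l; [exact: Sn_ge0 | exact: IH].
Qed.

Lemma wX j : w j = w 1%N ^+ j.
Proof. by elim: j => [|j IH]; rewrite ?w0 ?expr0 // exprS -IH -wD. Qed.

Definition Epoly N (c : C) : {poly C} := \poly_(k < N.+1) c ^+ k.
Definition Lpoly (c : C) : {poly C} := 1 - c *: 'X.

Lemma Sn_E N c : cmod c <= 1 -> Sn N (Epoly N c) <= \sum_(k < N.+1) (w 1%N) ^+ k.
Proof.
move=> hc; apply: ler_sum => k _; rewrite coef_poly ltn_ord cmodX wX.
rewrite -[X in _ <= X]mul1r; apply: ler_wpM2r; first by rewrite exprn_ge0 // -wX.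
by apply: exprn_ile1; rewrite ?cmod_ge0.
Qed.

Lemma low_LE N c : low N (Lpoly c * Epoly N c - 1).
Proof.
move=> j jN; rewrite /Lpoly mulrBl mul1r -scalerAl !coefB coefZ coefXM coef1 !coef_poly.
rewrite ltnS jN; case: j jN => [|j] jN /=; first by rewrite expr0 mulr0 subr0 subrr.
by rewrite ltnS (ltnW jN) exprS subrr sub0r oppr0.
Qed.

Lemma size_L c : (size (Lpoly c) <= 2)%N.
Proof.
apply: leq_trans (size_polyD _ _) _; rewrite size_poly1 size_polyN geq_max /=.
by apply: leq_trans (size_scale_leq _ _) _; rewrite size_polyX.
Qed.

Lemma Sn_L N c : cmod c <= 1 -> w 1%N <= 1 -> Sn N (Lpoly c) <= 2.
Proof.
move=> hc hw; apply: le_trans (Sn_size N 1 _ (size_L c)) _.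
rewrite /Sn !big_ord_recl big_ord0 addr0 /= /bump /=.
rewrite /Lpoly !coefB !coef1 !coefZ !coefX /= mulr0 subr0 cmod1 w0 mul1r mulr1 sub0r cmodN.
have : cmod c * w 1%N <= 1 by rewrite -(mulr1 1); apply: ler_pM => //; rewrite ?cmod_ge0 ?wge0.
by move=> h; rewrite [2]/(1+1) lerD2l.
Qed.

Lemma size_prodL (I : Type) (s : seq I) (a : I -> C) :
  (size (\prod_(i <- s) Lpoly (a i))%R <= (size s).+1)%N.
Proof.
elim: s => [|b s IH]; first by rewrite big_nil size_poly1.
rewrite big_cons; apply: leq_trans (size_mul_leq _ _) _.
have := size_L (a b); move: IH; rewrite /=; lia.
Qed.

End Aux.
Arguments Epoly {R}. Arguments Lpoly {R}. Arguments low {R}. Arguments Sn {R}. Arguments tl {R}.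

Section Arith.
Variable R : realType.
Local Notation C := (R[i]).

Lemma cm_pow (h : arith R) p k : completely_multiplicative h -> (0 < p)%N ->
  h (p ^ k)%N = h p ^+ k.
Proof.
move=> [h1 hM] p0; elim: k => [|k IH]; first by rewrite expn0 h1 expr0.
by rewrite expnS hM ?expn_gt0 ?p0 // IH exprS.
Qed.

Lemma divisors_pow p j : prime p ->
  perm_eq (divisors (p ^ j)) [seq (p ^ k)%N | k <- iota 0 j.+1].
Proof.
move=> pp; apply: uniq_perm; first exact: divisors_uniq.
  by rewrite map_inj_uniq ?iota_uniq //; exact: expnI (prime_gt1 pp).
move=> d; rewrite -dvdn_divisors ?expn_gt0 ?prime_gt0 //.
apply/(dvdn_pfactor _ _ pp)/mapP => -[m hm ->]; exists m => //.
  by rewrite mem_iota add0n ltnS.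
by move: hm; rewrite mem_iota add0n ltnS.
Qed.

Lemma dconv_pow (a b : arith R) p j : prime p ->
  dconv a b (p ^ j)%N = \sum_(k < j.+1) a (p ^ k)%N * b (p ^ (j - k))%N.
Proof.
move=> pp; rewrite /dconv (perm_big _ (divisors_pow p j pp)) big_map.
have -> : iota 0 j.+1 = index_iota 0 j.+1 by rewrite /index_iota subn0.
rewrite big_mkord; apply: eq_bigr => k _; congr (_ * b _).
by rewrite -expnB ?prime_gt0 // -ltnS.
Qed.

Lemma Fs_pow (I : Type) (fs : I -> arith R) (s : seq I) p N j : prime p ->
  (forall i, completely_multiplicative (fs i)) -> (j <= N)%N ->
  foldr (fun i acc => dconv (fs i) acc) (@delta R) s (p ^ j)%N =
  (\prod_(i <- s) Epoly N (fs i p))`_j.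
Proof.
move=> pp hcm; elim: s j => [|a s IH] j jN /=.
  rewrite big_nil coef1 /delta -[X in _ == X](expn0 p) eqn_exp2l ?prime_gt1 //.
  by case: j jN.
rewrite big_cons dconv_pow // coefM; apply: eq_bigr => k _.
have kj : (k <= j)%N by rewrite -ltnS.
rewrite IH; last exact: leq_trans (leq_subr _ _) jN.
rewrite cm_pow ?prime_gt0 // coef_poly ltnS (leq_trans kj jN) //.
Qed.

Lemma coef0_prodE (I : Type) (s : seq I) (c : I -> C) N :
  (\prod_(i <- s) Epoly N (c i))`_0 = 1.
Proof.
elim: s => [|a s IH]; first by rewrite big_nil coef1.
by rewrite big_cons coefM big_ord1 coef_poly IH expr0 mulr1.
Qed.

Lemma low_prodLE (I : Type) (s : seq I) (c : I -> C) N :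
  low N ((\prod_(i <- s) Lpoly (c i)) * (\prod_(i <- s) Epoly N (c i)) - 1).
Proof.
elim: s => [|a s IH]; first by rewrite !big_nil mulr1 subrr => j _; rewrite coef0.
rewrite !big_cons.
set P := \prod_(i <- s) _; set E := \prod_(i <- s) _.
have -> : Lpoly (c a) * P * (Epoly N (c a) * E) - 1 =
  (Lpoly (c a) * Epoly N (c a) - 1) * (P * E) + (P * E - 1) by ring.
by apply: low_add => //; apply: low_mulr; exact: low_LE.
Qed.

End Arith.

Section Final.
Variable R : realType.
Local Notation C := (R[i]).

Lemma prod_const_seq (I : Type) (r : seq I) (x : R) : \prod_(i <- r) x = x ^+ size r.
Proof. by elim: r => [|a r IH]; rewrite ?big_nil ?expr0 // big_cons IH exprS. Qed.

Lemma geom_le (x : R) n : 0 <= x -> x < 1 -> \sum_(k < n) x ^+ k <= (1 - x)^-1.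
Proof.
move=> x0 x1; have h : 0 < 1 - x by rewrite subr_gt0.
have e := subrXX 1 x n; rewrite expr1n in e.
have -> : \sum_(k < n) x ^+ k = (1 - x ^+ n) / (1 - x).
  rewrite e mulrC mulrA mulVf ?gt_eqF // mul1r; apply: eq_bigr => i _.
  by rewrite expr1n mul1r.
rewrite ler_pdivrMr // mulVf ?gt_eqF // gerBl; exact: exprn_ge0.
Qed.

Definition x0 (beta : R) : R := (2 `^ beta)^-1.
Definition Gc (beta : R) : R := (1 - x0 beta)^-1.
Definition Cst (d : nat) (beta : R) : R := Gc beta ^+ d * Gc beta ^+ d * 2 ^+ d * 2 ^+ d.

Lemma x0_ge0 beta : 0 <= x0 beta.
Proof. by rewrite invr_ge0 powR_ge0. Qed.
Lemma x0_lt1 beta : 0 < beta -> x0 beta < 1.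
Proof.
move=> hb; rewrite /x0 invf_lt1 ?powR_gt0 //.
by have := (gt0_ltr_powR hb) 1 2; rewrite powR1; apply; rewrite ?nnegrE ?ler01 ?ler0n ?ltr1n.
Qed.
Lemma Gc_ge0 beta : 0 < beta -> 0 <= Gc beta.
Proof. by move=> hb; rewrite invr_ge0 subr_ge0 ltW // x0_lt1. Qed.

Lemma per_prime d (fs gs : 'I_d -> arith R) (f g : arith R) beta p K :
  (forall i, completely_multiplicative (fs i)) ->
  (forall i n, (0 < n)%N -> cmod (fs i n) <= 1) ->
  (forall n, (0 < n)%N -> f n = dconv_big fs n) ->
  (forall i, completely_multiplicative (gs i)) ->
  (forall i n, (0 < n)%N -> cmod (gs i n) <= 1) ->
  (forall n, (0 < n)%N -> g n = dconv_big gs n) ->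
  0 < beta -> prime p ->
  \sum_(1 <= j < K.+1) cmod (f (p ^ j)%N - g (p ^ j)%N) / ((p%:R : R) `^ (j%:R * beta)) <=
  Cst d beta * \sum_(1 <= j < d.+1) cmod (f (p ^ j)%N - g (p ^ j)%N) / ((p%:R : R) `^ (j%:R * beta)).
Proof.
move=> fcm fb fe gcm gb ge hb pp.
pose w := fun j : nat => ((p%:R : R) `^ (j%:R * beta))^-1.
have p0 : (p%:R : R) != 0 by rewrite pnatr_eq0 -lt0n prime_gt0.
have w0 : w 0%N = 1 by rewrite /w mul0r powRr0 invr1.
have wge0 : forall j, 0 <= w j by move=> j; rewrite /w invr_ge0 powR_ge0.
have wD : forall j k, w (j + k)%N = w j * w k.
  by move=> j k; rewrite /w natrD mulrDl powRD ?p0 ?implybT // invfM.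
have x1 : w 1%N <= x0 beta.
  rewrite /w /x0 mul1r lef_pV2 ?posrE ?powR_gt0 //; last by rewrite lt0r p0 ler0n.
  have h2p : (2 : R) <= p%:R by rewrite ler_nat prime_gt1.
  move: h2p; rewrite le_eqVlt => /orP[/eqP <- //|h].
  by apply: ltW; apply: (gt0_ltr_powR hb) => //; rewrite nnegrE ler0n.
have xlt1 : w 1%N < 1 by apply: le_lt_trans x1 (x0_lt1 _ hb).
have geo : forall n, \sum_(k < n) w 1%N ^+ k <= Gc beta.
  move=> n; apply: le_trans (geom_le (w 1%N) n (wge0 1%N) xlt1) _.
  by rewrite lef_pV2 ?posrE ?subr_gt0 ?(x0_lt1 _ hb) // lerD2l lerN2.

set N := (K + d)%N.
have hKN : (K <= N)%N by rewrite /N; lia.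
have hdN : (d <= N)%N by rewrite /N; lia.
pose A : {poly C} := \poly_(j < N.+1) f (p ^ j)%N.
pose B : {poly C} := \poly_(j < N.+1) g (p ^ j)%N.
pose P := \prod_(i <- enum 'I_d) Lpoly (fs i p).
pose Q := \prod_(i <- enum 'I_d) Lpoly (gs i p).
pose EA := \prod_(i <- enum 'I_d) Epoly N (fs i p).
pose EB := \prod_(i <- enum 'I_d) Epoly N (gs i p).
have lowA : low N (A - EA).
  move=> j jN; rewrite coefB coef_poly ltnS jN fe ?expn_gt0 ?prime_gt0 //.
  by rewrite /dconv_big (Fs_pow _ _ _ _ _ _ _ pp fcm jN) subrr.
have lowB : low N (B - EB).
  move=> j jN; rewrite coefB coef_poly ltnS jN ge ?expn_gt0 ?prime_gt0 //.
  by rewrite /dconv_big (Fs_pow _ _ _ _ _ _ _ pp gcm jN) subrr.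
have hPA : low N (P * A - 1).
  have -> : P * A - 1 = P * (A - EA) + (P * EA - 1) by ring.
  by apply: low_add; [exact: low_mull | exact: low_prodLE].
have hQB : low N (Q * B - 1).
  have -> : Q * B - 1 = Q * (B - EB) + (Q * EB - 1) by ring.
  by apply: low_add; [exact: low_mull | exact: low_prodLE].
have A0 : A`_0 = 1.
  have := lowA 0%N (leq0n N); rewrite coefB coef0_prodE => /eqP.
  by rewrite subr_eq0 => /eqP.
have B0 : B`_0 = 1.
  have := lowB 0%N (leq0n N); rewrite coefB coef0_prodE => /eqP.
  by rewrite subr_eq0 => /eqP.
have Sge0 : forall M U, 0 <= Sn w M U by move=> M U; apply: Sn_ge0.
have bA : Sn w N A <= Gc beta ^+ d.
  have -> : Sn w N A = Sn w N EA by apply: Sn_low.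
  apply: le_trans; first by apply: Sn_prod.
  have -> : Gc beta ^+ d = \prod_(i <- enum 'I_d) Gc beta by rewrite prod_const_seq size_enum_ord.
  apply: ler_prod => i _; rewrite Sge0 /=; apply: le_trans (geo N.+1).
  apply: Sn_E => //; apply: fb; exact: prime_gt0.
have bB : Sn w N B <= Gc beta ^+ d.
  have -> : Sn w N B = Sn w N EB by apply: Sn_low.
  apply: le_trans; first by apply: Sn_prod.
  have -> : Gc beta ^+ d = \prod_(i <- enum 'I_d) Gc beta by rewrite prod_const_seq size_enum_ord.
  apply: ler_prod => i _; rewrite Sge0 /=; apply: le_trans (geo N.+1).
  apply: Sn_E => //; apply: gb; exact: prime_gt0.
have bP : Sn w d P <= 2 ^+ d.
  apply: le_trans; first by apply: Sn_prod.
  have -> : (2 : R) ^+ d = \prod_(i <- enum 'I_d) 2 by rewrite prod_const_seq size_enum_ord.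
  apply: ler_prod => i _; rewrite Sge0 /=; apply: Sn_L => //; last exact: ltW.
  by apply: fb; exact: prime_gt0.
have bQ : Sn w d Q <= 2 ^+ d.
  apply: le_trans; first by apply: Sn_prod.
  have -> : (2 : R) ^+ d = \prod_(i <- enum 'I_d) 2 by rewrite prod_const_seq size_enum_ord.
  apply: ler_prod => i _; rewrite Sge0 /=; apply: Sn_L => //; last exact: ltW.
  by apply: gb; exact: prime_gt0.
have sQP : (size (Q - P)%R <= d.+1)%N.
  apply: leq_trans (size_polyD _ _) _; rewrite size_polyN geq_max.
  by apply/andP; split; [have := size_prodL R _ (enum 'I_d) (fun i => gs i p) | have := size_prodL R _ (enum 'I_d) (fun i => fs i p)]; rewrite size_enum_ord.
set T := \sum_(1 <= j < d.+1) _.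
have eT : Sn w d (A - B) = T.
  rewrite /Sn -(big_mkord xpredT (fun j => cmod (A - B)`_j * w j)) big_ltn //.
  rewrite coefB A0 B0 subrr cmod0 mul0r add0r; apply: eq_big_nat => j /andP[j1 jd].
  rewrite coefB !coef_poly ifT; last by apply: leq_trans jd _; rewrite ltnS.
  by rewrite ifT //; apply: leq_trans jd _; rewrite ltnS.
have h1 : Sn w N (A - B) <= Sn w N A * Sn w N B * Sn w N (Q - P).
  have -> : Sn w N (A - B) = Sn w N (A * B * (Q - P)) by apply: Sn_low; exact: key1.
  apply: le_trans; first by apply: Sn_mul.
  by apply: ler_wpM2r; [exact: Sge0 | apply: Sn_mul].
have h2 : Sn w N (Q - P) <= Sn w d P * Sn w d Q * T.
  apply: le_trans (@Sn_size R w wge0 N d _ sQP) _.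
  rewrite -eT (Sn_swap _ _ _ A B) (Sn_swap _ _ _ Q P).
  have -> : Sn w d (P - Q) = Sn w d (P * Q * (B - A)).
    by apply: Sn_low; apply: (@low_le R d N _ hdN); exact: key2.
  apply: le_trans; first by apply: Sn_mul.
  by apply: ler_wpM2r; [exact: Sge0 | apply: Sn_mul].
have hT : 0 <= T by rewrite -eT.
have G0 := Gc_ge0 _ hb.
have h3 : Sn w N (A - B) <= Cst d beta * T.
  apply: le_trans h1 _; rewrite /Cst -!mulrA.
  apply: ler_pM; rewrite ?Sge0 ?mulr_ge0 //.
  apply: ler_pM; rewrite ?Sge0 ?exprn_ge0 //.
  apply: le_trans h2 _; rewrite mulrA; apply: ler_pM; rewrite ?mulr_ge0 ?Sge0 //.
  by apply: ler_pM; rewrite ?Sge0.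
apply: le_trans h3.
rewrite /Sn -(big_mkord xpredT (fun j => cmod (A - B)`_j * w j)) big_ltn //.
rewrite [X in _ <= _ + X](@big_cat_nat _ _ _ K.+1) //=.
rewrite addrCA -[X in X <= _]addr0; apply: lerD; last first.
  by rewrite addr_ge0 // ?mulr_ge0 ?cmod_ge0 ?wge0 // sumr_ge0 // => j _; rewrite mulr_ge0 ?cmod_ge0.
rewrite le_eqVlt; apply/orP; left; apply/eqP; apply: eq_big_nat => j /andP[j1 jK].
rewrite coefB !coef_poly ifT; last by apply: leq_trans jK _; rewrite ltnS.
by rewrite ifT //; apply: leq_trans jK _; rewrite ltnS.
Qed.

End Final.

Theorem lemma8 (R : realType) (d : nat) (f g : arith R) (beta : R) :
  (0 < d)%N -> in_S d f -> in_S d g -> 0 < beta ->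
  Dhat_finite beta d f g -> Dhat_inf_finite beta f g.
Proof.
move=> d0 [fs [fcm [fb fe]]] [gs [gcm [gb ge]]] hb [M hM].
have C0 : 0 <= Cst R d beta.
  have := @Gc_ge0 R beta hb; rewrite /Cst => hG; rewrite !mulr_ge0 // exprn_ge0 //.
exists (Cst R d beta * M) => N K.
apply: (@le_trans _ _ (Cst R d beta * Dpart beta d f g N)); last first.
  by apply: ler_wpM2l.
rewrite /Dpart big_distrr /=; apply: ler_sum => p pp.
exact: (@per_prime R d fs gs f g beta p K fcm fb fe gcm gb ge hb pp).
Qed.
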